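(* Let $k$ be a positive integer, $S\subset\mathbb{Z}$ a finite set, and $(X,\mathcal{X},\mu,T)$ an invertible measure preserving system. Assume the integers $e_{i,n,N}$ ($1\le i\le k$) take values in $S$. Then for any integer sequences $a_{i,N}(n)$, any complex numbers $c'_{n,N}$ with $|c'_{n,N}|\le1$ and any functions $f_{i,N}\in L^\infty(\mu)$ bounded by $1$, $$\Big\|\frac1N\sum_{n=1}^N c'_{n,N}T^{a_{1,N}(n)+e_{1,n,N}}f_{1,N}\cdots T^{a_{k,N}(n)+e_{k,n,N}}f_{k,N}\Big\|_{L^2(\mu)}\le C\sup_{|c_{n,N}|\le1}\ \sup_{\|f_2\|_\infty,\dots,\|f_k\|_\infty\le1}\Big\|\frac1N\sum_{n=1}^Nc_{n,N}T^{a_{1,N}(n)}f_{1,N}\cdot T^{a_{2,N}(n)}f_2\cdots T^{a_{k,N}(n)}f_k\Big\|_{L^2(\mu)},$$ where $C$ depends only on $k$ and $S$. As a consequence, there exist functions $f'_{2,N},\dots,f'_{k,N}$ bounded by $1$ such that the left-hand side is bounded by a constant (depending only on $k,S$) multiple of $$\sup_{|c_{n,N}|\le1}\Big\|\frac1N\sum_{n=1}^Nc_{n,N}T^{a_{1,N}(n)}f_{1,N}\cdot T^{a_{2,N}(n)}f'_{2,N}\cdots T^{a_{k,N}(n)}f'_{k,N}\Big\|_{L^2(\mu)}+o_N(1).$$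
   Context: $T^mf=f\circ T^m$. Suprema are over complex sequences and functions in $L^\infty(\mu)$. $o_N(1)$ denotes a quantity tending to $0$ as $N\to\infty$. *)

(* Defs.v *)
From HB Require Import structures.
From mathcomp Require Import all_boot all_order all_algebra.
From mathcomp Require Import all_classical all_reals all_analysis.
From mathcomp Require Import complex.
Set Implicit Arguments. Unset Strict Implicit. Unset Printing Implicit Defensive.
Import Order.TTheory GRing.Theory Num.Theory.
Local Open Scope ring_scope.
Local Open Scope classical_set_scope.

Section Defs.
Context {R : realType} {d : measure_display} {X : measurableType d}.

Definition cabs (z : R[i]) : R := Normc.normc z.

Definition cmeasurable (f : X -> R[i]) : Prop :=
  measurable_fun setT (fun x => complex.Re (f x)) /\
  measurable_fun setT (fun x => complex.Im (f x)).

(* f is an element of L^oo(mu) with ||f||_oo <= 1 (bounded representative) *)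
Definition bdd1 (f : X -> R[i]) : Prop :=
  cmeasurable f /\ forall x, cabs (f x) <= 1.

Definition L2norm (mu : {measure set X -> \bar R}) (F : X -> R[i]) : R :=
  Num.sqrt (Rintegral mu setT (fun x => cabs (F x) ^+ 2)).

Definition invertible_mps (mu : {measure set X -> \bar R})
    (T Tinv : X -> X) : Prop :=
  [/\ measurable_fun setT T, measurable_fun setT Tinv,
      cancel T Tinv, cancel Tinv T &
      forall A, measurable A -> mu (T @^-1` A) = mu A].

Definition Tpow (T Tinv : X -> X) (m : int) : X -> X :=
  match m with
  | Posz n => iter n T
  | Negz n => iter n.+1 Tinv
  end.

Definition avg (T Tinv : X -> X) (k N : nat) (c : nat -> R[i])
    (b : 'I_k -> nat -> int) (g : 'I_k -> X -> R[i]) : X -> R[i] :=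
  fun x => (N%:R)^-1 * \sum_(1 <= n < N.+1)
             c n * \prod_(i < k) g i (Tpow T Tinv (b i n) x).

End Defs.

(* Main.v *)
Require Import Defs.
From HB Require Import structures.
From mathcomp Require Import all_boot all_order all_algebra.
From mathcomp Require Import all_classical all_reals all_analysis.
From mathcomp Require Import complex.
From mathcomp Require Import measurable_realfun.
From mathcomp Require Import ring lra zify.
Import Order.TTheory GRing.Theory Num.Theory.
Local Open Scope ring_scope.
Local Open Scope classical_set_scope.
Section Aux.
Context {R : realType} {d : measure_display} {X : measurableType d}.
Implicit Types (F G : X -> R[i]).

Lemma ReD' (x y : R[i]) : complex.Re (x + y) = complex.Re x + complex.Re y. Proof. by case: x; case: y. Qed.
Lemma ImD' (x y : R[i]) : complex.Im (x + y) = complex.Im x + complex.Im y. Proof. by case: x; case: y. Qed.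
Lemma ReM' (x y : R[i]) : complex.Re (x * y) = complex.Re x * complex.Re y - complex.Im x * complex.Im y.
Proof. by case: x; case: y. Qed.
Lemma ImM' (x y : R[i]) : complex.Im (x * y) = complex.Re x * complex.Im y + complex.Im x * complex.Re y.
Proof. by case: x; case: y. Qed.

Lemma cmeas_cst (c : R[i]) : cmeasurable (fun _ : X => c).
Proof. by split; exact: measurable_cst. Qed.

Lemma cmeasD F G : cmeasurable F -> cmeasurable G -> cmeasurable (fun x => F x + G x).
Proof.
move=> [f1 f2] [g1 g2]; split.
  rewrite (_ : (fun x => _) = (fun x => complex.Re (F x) + complex.Re (G x))); last first.
    by apply/funext => x; rewrite ReD'.
  exact: measurable_funD.
rewrite (_ : (fun x => _) = (fun x => complex.Im (F x) + complex.Im (G x))); last first.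
  by apply/funext => x; rewrite ImD'.
exact: measurable_funD.
Qed.

Lemma cmeasM F G : cmeasurable F -> cmeasurable G -> cmeasurable (fun x => F x * G x).
Proof.
move=> [f1 f2] [g1 g2]; split.
  rewrite (_ : (fun x => _) = (fun x => complex.Re (F x) * complex.Re (G x) - complex.Im (F x) * complex.Im (G x))); last first.
    by apply/funext => x; rewrite ReM'.
  by apply: measurable_funB; apply: measurable_funM.
rewrite (_ : (fun x => _) = (fun x => complex.Re (F x) * complex.Im (G x) + complex.Im (F x) * complex.Re (G x))); last first.
  by apply/funext => x; rewrite ImM'.
by apply: measurable_funD; apply: measurable_funM.
Qed.

Lemma cmeas_comp (phi : X -> X) F : measurable_fun setT phi -> cmeasurable F ->
  cmeasurable (fun x => F (phi x)).
Proof. by move=> mp [f1 f2]; split; [exact: (measurableT_comp f1 mp)|exact: (measurableT_comp f2 mp)]. Qed.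

Lemma cmeas_sum (I : Type) (r : seq I) (P : pred I) (Fs : I -> X -> R[i]) :
  (forall i, cmeasurable (Fs i)) -> cmeasurable (fun x => \sum_(i <- r | P i) Fs i x).
Proof.
move=> hF; elim: r => [|a r IH].
  rewrite (_ : (fun x => _) = (fun _ => 0)); first exact: cmeas_cst.
  by apply/funext => x; rewrite big_nil.
case Pa: (P a).
  rewrite (_ : (fun x => _) = (fun x => Fs a x + \sum_(i <- r | P i) Fs i x)).
    exact: cmeasD.
  by apply/funext => x; rewrite big_cons Pa.
rewrite (_ : (fun x => _) = (fun x => \sum_(i <- r | P i) Fs i x)) //.
by apply/funext => x; rewrite big_cons Pa.
Qed.

Lemma cmeas_prod (I : Type) (r : seq I) (P : pred I) (Fs : I -> X -> R[i]) :
  (forall i, cmeasurable (Fs i)) -> cmeasurable (fun x => \prod_(i <- r | P i) Fs i x).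
Proof.
move=> hF; elim: r => [|a r IH].
  rewrite (_ : (fun x => _) = (fun _ => 1)); first exact: cmeas_cst.
  by apply/funext => x; rewrite big_nil.
case Pa: (P a).
  rewrite (_ : (fun x => _) = (fun x => Fs a x * \prod_(i <- r | P i) Fs i x)).
    exact: cmeasM.
  by apply/funext => x; rewrite big_cons Pa.
rewrite (_ : (fun x => _) = (fun x => \prod_(i <- r | P i) Fs i x)) //.
by apply/funext => x; rewrite big_cons Pa.
Qed.

Lemma mTpow (T Tinv : X -> X) : measurable_fun setT T -> measurable_fun setT Tinv ->
  forall m, measurable_fun setT (Tpow T Tinv m).
Proof.
move=> mT mTi [] n /=.
  elim: n => [|n IH] /=; first exact: measurable_id.
  exact: measurableT_comp.
elim: n => [|n IH] /=; first exact: mTi.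
exact: measurableT_comp.
Qed.

Lemma cmeas_avg (T Tinv : X -> X) k N c b (g : 'I_k -> X -> R[i]) :
  measurable_fun setT T -> measurable_fun setT Tinv ->
  (forall i, cmeasurable (g i)) -> cmeasurable (avg T Tinv N c b g).
Proof.
move=> mT mTi hg; apply: cmeasM; first exact: cmeas_cst.
apply: cmeas_sum => n; apply: cmeasM; first exact: cmeas_cst.
apply: cmeas_prod => i; apply: cmeas_comp => //; exact: mTpow.
Qed.

Lemma cabs_ge0 (z : R[i]) : 0 <= cabs z.
Proof. by case: z => a b; rewrite /cabs /Normc.normc sqrtr_ge0. Qed.

Lemma cabs2 (z : R[i]) : cabs z ^+ 2 = complex.Re z ^+ 2 + complex.Im z ^+ 2.
Proof. by case: z => a b; rewrite /cabs /Normc.normc sqr_sqrtr // addr_ge0 // sqr_ge0. Qed.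

Lemma cabsM (x y : R[i]) : cabs (x * y) = cabs x * cabs y.
Proof. exact: Normc.normcM. Qed.

Lemma cabsD (x y : R[i]) : cabs (x + y) <= cabs x + cabs y.
Proof. exact: le_normcD. Qed.

Lemma cabs0 : cabs (0 : R[i]) = 0. Proof. exact: Normc.normc0. Qed.
Lemma cabs1 : cabs (1 : R[i]) = 1. Proof. exact: Normc.normc1. Qed.

Lemma cabs_sum (I : Type) (r : seq I) (P : pred I) (Fs : I -> R[i]) :
  cabs (\sum_(i <- r | P i) Fs i) <= \sum_(i <- r | P i) cabs (Fs i).
Proof.
elim/big_ind2: _ => //; first by rewrite cabs0.
move=> x1 x2 y1 y2 h1 h2; apply: le_trans (cabsD _ _) _; exact: lerD.
Qed.

Lemma cabs_prod_le1 (I : Type) (r : seq I) (P : pred I) (Fs : I -> R[i]) :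
  (forall i, cabs (Fs i) <= 1) -> cabs (\prod_(i <- r | P i) Fs i) <= 1.
Proof.
move=> h; elim/big_ind: _ => //; first by rewrite cabs1.
move=> x y hx hy; rewrite cabsM; apply: mulr_ile1 => //; exact: cabs_ge0.
Qed.

End Aux.

Section Aux2.
Context {R : realType} {d : measure_display} {X : measurableType d}.

Lemma cs (J : finType) (a : J -> R) : (0 < #|J|)%N ->
  (\sum_j a j)^+2 <= #|J|%:R * \sum_j a j ^+ 2.
Proof.
move=> Jpos.
set s := \sum_j a j; set m : R := #|J|%:R.
have mpos : 0 < m by rewrite ltr0n.
have h : 0 <= \sum_j (m * a j - s)^+2 by apply: sumr_ge0 => j _; exact: sqr_ge0.
have e : \sum_j (m * a j - s)^+2 = m * (m * \sum_j a j^+2 - s ^+ 2).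
  rewrite (eq_bigr (fun j => m^+2 * a j^+2 - (2 * m * s) * a j + s^+2)); last by move=> j _; ring.
  rewrite big_split /= sumrB -!mulr_sumr -/s sumr_const.
  rewrite (_ : #|(fun _ : J => true)| = #|J|); last exact: eq_card.
  rewrite -mulr_natr -/m; ring.
rewrite e in h.
have : 0 <= m * \sum_j a j^+2 - s ^+ 2 by rewrite -(pmulr_rge0 _ mpos).
lra.
Qed.


Section Tp.
Context (T Tinv : X -> X) (c1 : cancel T Tinv) (c2 : cancel Tinv T).

Lemma TpowS z x : Tpow T Tinv (z + 1) x = T (Tpow T Tinv z x).
Proof.
case: z => [p|[|p]].
- by rewrite (_ : Posz p + 1 = Posz p.+1) //; lia.
- by rewrite /= c2.
- have -> : Negz p.+1 + 1 = Negz p by rewrite !NegzE; lia.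
  by rewrite [in RHS]/Tpow [iter p.+2 _ _]/= c2.
Qed.

Lemma TpowN1 z x : Tpow T Tinv (z - 1) x = Tinv (Tpow T Tinv z x).
Proof.
case: z => [[|p]|p].
- by [].
- have -> : Posz p.+1 - 1 = Posz p by lia.
  by rewrite [in RHS]/Tpow [iter p.+1 _ _]/= c1.
- have -> : Negz p - 1 = Negz p.+1 by rewrite !NegzE; lia.
  by [].
Qed.

Lemma TpowD m n x : Tpow T Tinv m (Tpow T Tinv n x) = Tpow T Tinv (m + n) x.
Proof.
case: m => [p|p].
  elim: p => [|p IH]; first by rewrite add0r.
  rewrite (_ : Posz p.+1 + n = (Posz p + n) + 1); last by lia.
  by rewrite TpowS -IH.
elim: p => [|p IH].
  rewrite (_ : Negz 0 + n = n - 1); last by rewrite NegzE; lia.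
  by rewrite TpowN1.
rewrite (_ : Negz p.+1 + n = (Negz p + n) - 1); last by rewrite !NegzE; lia.
by rewrite TpowN1 -IH.
Qed.

End Tp.

End Aux2.

Section Aux3.
Context {R : realType} {d : measure_display} {X : measurableType d}.
Context (mu : probability X R).

Definition mpres (phi : X -> X) :=
  forall A, measurable A -> mu (phi @^-1` A) = mu A.

Lemma mp_iter (phi : X -> X) : measurable_fun setT phi -> mpres phi ->
  forall n, mpres (iter n phi).
Proof.
move=> mphi hp; elim => [|n IH] A mA; first by [].
rewrite (_ : iter n.+1 phi @^-1` A = iter n phi @^-1` (phi @^-1` A)) //.
rewrite IH ?hp //.
by have := mphi measurableT A mA; rewrite setTI.
Qed.

Lemma mpTpow (T Tinv : X -> X) : invertible_mps mu T Tinv ->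
  forall m, mpres (Tpow T Tinv m).
Proof.
move=> [mT mTi c1 c2 hp].
have hpi : mpres Tinv.
  move=> A mA.
  have mA' : measurable (Tinv @^-1` A).
    by have := mTi measurableT A mA; rewrite setTI.
  rewrite -(hp _ mA').
  congr (mu _); apply/seteqP; split => x /=; by rewrite /preimage /= c1.
case=> n /=; first exact: mp_iter.
exact: mp_iter.
Qed.

Lemma int_inv (phi : X -> X) (h : X -> \bar R) : measurable_fun setT phi -> mpres phi ->
  measurable_fun setT h -> (forall x, (0 <= h x)%E) ->
  (\int[mu]_x h (phi x) = \int[mu]_x h x)%E.
Proof.
move=> mphi hp mh h0.
have := ge0_integral_pushforward mphi mu measurableT mh (in1W h0).
rewrite preimage_setT => <-.
apply: eq_measure_integral => A mA _.
exact: hp.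
Qed.

Definition q (F : X -> R[i]) := fun x => cabs (F x) ^+ 2.

Lemma q_meas F : cmeasurable F -> measurable_fun setT (q F).
Proof.
move=> [f1 f2].
rewrite (_ : q F = fun x => complex.Re (F x) ^+ 2 + complex.Im (F x) ^+ 2).
  by apply: measurable_funD; apply: measurable_funX.
by apply/funext => x; rewrite /q cabs2.
Qed.

Lemma q_ge0 F x : 0 <= q F x.
Proof. exact: sqr_ge0. Qed.

Lemma q_fin F : cmeasurable F -> (forall x, cabs (F x) <= 1) ->
  (\int[mu]_x (q F x)%:E)%E \is a fin_num.
Proof.
move=> mF hF.
rewrite ge0_fin_numE; last by apply: integral_ge0 => x _; rewrite lee_fin q_ge0.
apply: (@le_lt_trans _ _ (\int[mu]_x (cst 1%E x))%E).
  apply: ge0_le_integral => //.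
  - by move=> x _; rewrite lee_fin q_ge0.
  - exact/measurable_EFinP/q_meas.
  - move=> x _; rewrite lee_fin /q -(expr1n _ 2%N).
    rewrite lerXn2r ?nnegrE ?cabs_ge0 //.
rewrite integral_cst // mul1e; apply: (le_lt_trans (probability_le1 mu measurableT)); exact: ltry.
Qed.

End Aux3.

Section Aux4.
Context {R : realType} {d : measure_display} {X : measurableType d}.

Lemma avg_le1 (T Tinv : X -> X) k N (c : nat -> R[i]) b (g : 'I_k -> X -> R[i]) x :
  (forall n, cabs (c n) <= 1) -> (forall i y, cabs (g i y) <= 1) ->
  cabs (avg T Tinv N c b g x) <= 1.
Proof.
move=> hc hg; rewrite /avg cabsM.
have hN : cabs ((N%:R : R[i])^-1) = (N%:R)^-1.
  rewrite /cabs Normc.normcV; congr (_^-1).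
  by rewrite -[N%:R]/(1 *+ N) normcMn Normc.normc1.
rewrite hN.
apply: (@le_trans _ _ ((N%:R)^-1 * \sum_(1 <= n < N.+1) (1 : R))).
  apply: ler_wpM2l; first by rewrite invr_ge0 ler0n.
  apply: le_trans (cabs_sum _ _ _ _) _.
  apply: ler_sum => n _; rewrite cabsM.
  apply: mulr_ile1 => //; [exact: cabs_ge0|exact: cabs_ge0|].
  exact: cabs_prod_le1.
rewrite sumr_const_nat subn1 /=.
clear hN; case: N => [|N]; first by rewrite invr0 mul0r.
by rewrite mulVf.
Qed.

Lemma bdd1_comp (f : X -> R[i]) (phi : X -> X) : measurable_fun setT phi -> bdd1 f ->
  bdd1 (fun x => f (phi x)).
Proof. by move=> mp [mf hf]; split => //; exact: cmeas_comp. Qed.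

End Aux4.

Lemma part1 (R : realType) (k : nat) (S : seq int) (hk : (0 < k)%N)
  (d : measure_display) (X : measurableType d)
  (mu : probability X R) (T Tinv : X -> X) (hT : invertible_mps mu T Tinv)
  (e : 'I_k -> nat -> nat -> int) (a : 'I_k -> nat -> nat -> int)
  (c' : nat -> nat -> R[i]) (f : nat -> 'I_k -> X -> R[i])
  (he : forall i n N, e i n N \in S)
  (hc : forall N n, cabs (c' N n) <= 1)
  (hf : forall N i, bdd1 (f N i)) (N : nat) :
      ((L2norm mu (avg T Tinv N (c' N)
                     (fun i n => a i N n + e i n N) (f N)))%:E
       <= ((size S ^ k)%:R : R)%:E * ereal_sup
            [set (L2norm mu (avg T Tinv N cg.1 (fun i n => a i N n)
                   (fun i => if nat_of_ord i == 0%N then f N i else cg.2 i)))%:E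
            | cg in [set cg : (nat -> R[i]) * ('I_k -> X -> R[i]) |
                     (forall n, (cabs (cg.1 n) <= 1)%R) /\
                     (forall i, bdd1 (cg.2 i)) ]])%E.
Proof.
have hT' := hT; move: hT' => [mT mTi c1 c2 hp].
set L := size S.
pose i0 : 'I_k := Ordinal hk.
have hix : forall i n, (index (e i n N) S < L)%N by move=> i n; rewrite index_mem.
pose J := {ffun 'I_k -> 'I_L}.
pose cls (n : nat) : J := [ffun i => Ordinal (hix i n)].
pose sig (j : J) (i : 'I_k) : int := nth 0 S (j i).
have hsig : forall n i, sig (cls n) i = e i n N.
  by move=> n i; rewrite /sig ffunE /= nth_index.
pose cj (j : J) (n : nat) : R[i] := if j == cls n then c' N n else 0.
pose gj (j : J) (i : 'I_k) : X -> R[i] :=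
  fun x => f N i (Tpow T Tinv (sig j i - sig j i0) x).
pose hj (j : J) (i : 'I_k) : X -> R[i] := if nat_of_ord i == 0%N then f N i else gj j i.
pose Gj (j : J) := avg T Tinv N (cj j) (fun i n => a i N n) (hj j).
pose phij (j : J) := Tpow T Tinv (sig j i0).
set F := avg _ _ _ _ _ _.
have key : forall x, F x = \sum_j Gj j (phij j x).
  move=> x; rewrite /F /Gj /avg -mulr_sumr; congr (_ * _).
  rewrite exchange_big /=; apply: eq_bigr => n _.
  rewrite (bigD1 (cls n)) //= [X in _ = _ + X]big1 ?addr0; last first.
    by move=> j /negbTE hj'; rewrite /cj hj' mul0r.
  rewrite /cj eqxx; congr (_ * _); apply: eq_bigr => i _.
  rewrite /hj /gj; case: ifP => hi0.
    have -> : i = i0 by apply: val_inj; apply/eqP.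
    by rewrite /phij TpowD // hsig.
  rewrite /phij !TpowD //; congr (f N i (Tpow T Tinv _ x)).
  rewrite !hsig; lia.
have mTp := mTpow _ _ mT mTi.
have hbG : forall j y, cabs (Gj j y) <= 1.
  move=> j y; apply: avg_le1.
  - by move=> n; rewrite /cj; case: ifP => _; [exact: hc | rewrite cabs0 ler01].
  - move=> i z; rewrite /hj; case: ifP => _; first exact: (hf N i).2.
    exact: (hf N i).2.
have hmG : forall j, cmeasurable (Gj j).
  move=> j; apply: cmeas_avg => // i; rewrite /hj; case: ifP => _; first exact: (hf N i).1.
  exact: (proj1 (bdd1_comp _ _ (mTp (sig j i - sig j i0)) (hf N i))).
have hmF : cmeasurable F by apply: cmeas_avg => // i; exact: (hf N i).1.
have hbF : forall x, cabs (F x) <= 1.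
  by move=> x; apply: avg_le1 => [n|i y]; [exact: hc | exact: (hf N i).2].
pose Ij j := fine (\int[mu]_x (q (Gj j) x)%:E)%E.
have hIj : forall j, (\int[mu]_x (q (Gj j) x)%:E)%E = (Ij j)%:E.
  by move=> j; rewrite fineK // q_fin.
have Ij0 : forall j, 0 <= Ij j.
  by move=> j; rewrite /Ij fine_ge0 // integral_ge0 // => x _; rewrite lee_fin q_ge0.
pose m : R := #|J|%:R.
have mE : m = (L ^ k)%:R by rewrite /m card_ffun !card_ord.
have Jpos : (0 < #|J|)%N by apply/card_gt0P; exists (cls 1%N).
have pw : forall x, q F x <= m * \sum_j q (Gj j) (phij j x).
  move=> x; rewrite /q key.
  apply: (@le_trans _ _ ((\sum_j cabs (Gj j (phij j x)))^+2)).
    rewrite lerXn2r ?nnegrE ?cabs_ge0 //.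
      by apply: sumr_ge0 => j _; exact: cabs_ge0.
    exact: cabs_sum.
  exact: (cs J (fun j => cabs (Gj j (phij j x))) Jpos).
have hint : (\int[mu]_x (q F x)%:E <= (m * \sum_j Ij j)%:E)%E.
  apply: (@le_trans _ _ (\int[mu]_x (m * \sum_j q (Gj j) (phij j x))%:E)%E).
    apply: ge0_le_integral => //.
    - by move=> x _; rewrite lee_fin q_ge0.
    - exact/measurable_EFinP/q_meas.
    - apply/measurable_EFinP; apply: measurable_funM; first exact: measurable_cst.
      apply: measurable_sum => j; exact: (measurableT_comp (q_meas _ (hmG j)) (mTp (sig j i0))).
    - by move=> x _; rewrite lee_fin pw.
  under eq_integral do rewrite EFinM.
  rewrite ge0_integralZl_EFin //; first last.
  - apply/measurable_EFinP; apply: measurable_sum => j.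
    exact: (measurableT_comp (q_meas _ (hmG j)) (mTp (sig j i0))).
  - by move=> x _; rewrite lee_fin sumr_ge0 // => j _; exact: q_ge0.
  have -> : (\int[mu]_x (\sum_j q (Gj j) (phij j x))%:E)%E = (\sum_j Ij j)%:E.
    under eq_integral do rewrite -sumEFin.
    rewrite ge0_integral_sum //; first last.
    - by move=> j x _; rewrite lee_fin q_ge0.
    - move=> j; apply/measurable_EFinP.
      exact: (measurableT_comp (q_meas _ (hmG j)) (mTp (sig j i0))).
    rewrite -sumEFin; apply: eq_bigr => j _; rewrite -hIj.
    apply: (int_inv mu (phij j) (fun y => (q (Gj j) y)%:E)).
    - exact: mTp.
    - exact: mpTpow.
    - exact/measurable_EFinP/q_meas.
    - by move=> y; rewrite lee_fin q_ge0.
  by rewrite EFinM.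
have hR : Rintegral mu setT (q F) <= m * \sum_j Ij j.
  by have := fine_le (q_fin mu F hmF hbF) _ hint; apply.
suff final : forall u : \bar R, (forall j, (L2norm mu (Gj j))%:E <= u)%E ->
    ((L2norm mu F)%:E <= m%:E * u)%E.
  rewrite -mE; apply: final => j; apply: ereal_sup_ubound.
  exists (cj j, gj j) => //; split => /=.
  - by move=> n; rewrite /cj; case: ifP => _; [exact: hc | rewrite cabs0 ler01].
  - move=> i; exact: (bdd1_comp _ _ (mTp (sig j i - sig j i0)) (hf N i)).
have mpos : 0 < m by rewrite ltr0n.
case=> [r||] hs.
- have r0 : 0 <= r by have := hs (cls 1%N); rewrite lee_fin; apply: le_trans; exact: sqrtr_ge0.
  have hI : forall j, Ij j <= r ^+ 2.
    move=> j; rewrite -(sqr_sqrtr (Ij0 j)) lerXn2r ?nnegrE ?sqrtr_ge0 //.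
    by have := hs j; rewrite lee_fin.
  rewrite -EFinM lee_fin /L2norm.
  have mr0 : 0 <= m * r by rewrite mulr_ge0 // ltW.
  rewrite -(ger0_norm mr0) -sqrtr_sqr ler_sqrt ?sqr_ge0 //.
  apply: (le_trans hR).
  apply: (@le_trans _ _ (m * \sum_(j : J) r ^+ 2)).
    by apply: ler_wpM2l; [exact: ltW | apply: ler_sum => j _; exact: hI].
  rewrite sumr_const (_ : #|(fun _ : J => true)| = #|J|); last exact: eq_card.
  rewrite -mulr_natr -/m le_eqVlt; apply/orP; left; apply/eqP; ring.
- by rewrite gt0_muley ?leey // lte_fin.
- by have := hs (cls 1%N); rewrite leeNy_eq.
Qed.

Theorem lemma3p2 (R : realType) (k : nat) (S : seq int) (hk : (0 < k)%N) :
  (exists C : R,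
    forall (d : measure_display) (X : measurableType d)
      (mu : probability X R) (T Tinv : X -> X),
    invertible_mps mu T Tinv ->
    forall (e : 'I_k -> nat -> nat -> int)
      (a : 'I_k -> nat -> nat -> int)
      (c' : nat -> nat -> R[i]) (f : nat -> 'I_k -> X -> R[i]),
    (forall i n N, e i n N \in S) ->
    (forall N n, cabs (c' N n) <= 1) ->
    (forall N i, bdd1 (f N i)) ->
    forall N : nat,
      ((L2norm mu (avg T Tinv N (c' N)
                     (fun i n => a i N n + e i n N) (f N)))%:E
       <= C%:E * ereal_sup
            [set (L2norm mu (avg T Tinv N cg.1 (fun i n => a i N n)
                   (fun i => if nat_of_ord i == 0%N then f N i else cg.2 i)))%:E
            | cg in [set cg : (nat -> R[i]) * ('I_k -> X -> R[i]) |
                     (forall n, (cabs (cg.1 n) <= 1)%R) /\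
                     (forall i, bdd1 (cg.2 i)) ]])%E) /\
  (exists C' : R,
    forall (d : measure_display) (X : measurableType d)
      (mu : probability X R) (T Tinv : X -> X),
    invertible_mps mu T Tinv ->
    forall (e : 'I_k -> nat -> nat -> int)
      (a : 'I_k -> nat -> nat -> int)
      (c' : nat -> nat -> R[i]) (f : nat -> 'I_k -> X -> R[i]),
    (forall i n N, e i n N \in S) ->
    (forall N n, cabs (c' N n) <= 1) ->
    (forall N i, bdd1 (f N i)) ->
    exists (f' : nat -> 'I_k -> X -> R[i]) (eps : nat -> R),
      (forall N i, bdd1 (f' N i)) /\
      eps @ \oo --> 0 /\
      forall N : nat,
        ((L2norm mu (avg T Tinv N (c' N)
                       (fun i n => a i N n + e i n N) (f N)))%:E
         <= C'%:E * (ereal_sup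
              [set (L2norm mu (avg T Tinv N c (fun i n => a i N n)
                     (fun i => if nat_of_ord i == 0%N then f N i else f' N i)))%:E
              | c in [set c : nat -> R[i] | forall n, (cabs (c n) <= 1)%R]]
              + (eps N)%:E))%E).
Proof.
split.
  exists ((size S ^ k)%:R) => d X mu T Tinv hT e a c' f he hc hf N.
  exact: part1.
exists ((size S ^ k)%:R) => d X mu T Tinv hT e a c' f he hc hf.
set C : R := (size S ^ k)%:R.
have Cpos : 0 < C.
  rewrite /C ltr0n expn_gt0; apply/orP; left.
  by have := he (Ordinal hk) 0%N 0%N; case: (S).
pose eps : nat -> R := fun N => (N.+1%:R)^-1.
have hN : forall N, exists g : 'I_k -> X -> R[i], (forall i, bdd1 (g i)) /\
    ((L2norm mu (avg T Tinv N (c' N) (fun i n => a i N n + e i n N) (f N)))%:E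
         <= C%:E * (ereal_sup
              [set (L2norm mu (avg T Tinv N c (fun i n => a i N n)
                     (fun i => if nat_of_ord i == 0%N then f N i else g i)))%:E
              | c in [set c : nat -> R[i] | forall n, (cabs (c n) <= 1)%R]]
              + (eps N)%:E))%E.
  move=> N.
  have P1 := @part1 R k S hk d X mu T Tinv hT e a c' f he hc hf N.
  set LHS := L2norm _ _ in P1 *.
  set u := ereal_sup _ in P1.
  set t : R := LHS / C - eps N.
  have tu : (t%:E < u)%E.
    move: P1; rewrite /u; case: (ereal_sup _) => [r||] P1.
    - rewrite lte_fin /t; rewrite lee_fin in P1.
      have : LHS / C <= r by rewrite ler_pdivrMr // mulrC.
      have : 0 < eps N by rewrite /eps invr_gt0 ltr0n.
      lra.
    - exact: ltry.
    - by move: P1; rewrite gt0_muleNy ?lte_fin // leeNy_eq.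
  have [y [cg [hcg1 hcg2] <-] ty] := ereal_sup_gt tu.
  exists cg.2; split => //.
  have Cle : LHS = C * (t + eps N) by rewrite /t subrK mulrC divfK // gt_eqF.
  rewrite Cle EFinM; apply: lee_wpmul2l; first by rewrite lee_fin ltW.
  rewrite EFinD; apply: leeD => //.
  apply: le_trans (ltW ty) _; apply: ereal_sup_ubound.
  by exists cg.1.
have [f' hf'] := choice hN.
exists f', eps; split; first by move=> N; exact: (hf' N).1.
split; first exact: cvg_harmonic.
by move=> N; exact: (hf' N).2.
Qed.
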